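(* Suppose $a\in C^2(\mathbb{R})$. Let $\tilde\alpha\in\mathbb{R}^2$ be such that $a'(\tilde\alpha_2)>0$. Given $s_0,t_0>0$ sufficiently small depending on the function $a$ and $\tilde\alpha_2$, there exists $0<\epsilon_0<1$ sufficiently small such that for all $0<\epsilon\leq \epsilon_0$, the system \begin{equation*} G^{\epsilon}(\gamma)=0 \end{equation*} has a non-negative solution.
   Context: Let $a:\mathbb{R}\to\mathbb{R}$, $F(\xi)=\int_0^\xi a(s)\,ds$, and for $\alpha\in\mathbb{R}^2$ let $$P_1^{\alpha}(u,v):=\begin{pmatrix} u-\alpha_1 & v-\alpha_2 \\ a(v)-a(\alpha_2) & u-\alpha_1\\ (u-\alpha_1)(a(v)-a(\alpha_2)) & \frac{(u-\alpha_1)^2}{2}+F(v)-F(\alpha_2)-a(\alpha_2)(v-\alpha_2) \end{pmatrix}.$$ Given $s_0,t_0>0$ set $\zeta_1:=P_1^{\tilde\alpha}(\tilde\alpha_1+s_0,\tilde\alpha_2)$, $\zeta_2:=P_1^{\tilde\alpha}(\tilde\alpha_1-s_0,\tilde\alpha_2)$, $\zeta_3:=P_1^{\tilde\alpha}(\tilde\alpha_1,\tilde\alpha_2+t_0)$, $\zeta_4:=P_1^{\tilde\alpha}(\tilde\alpha_1,\tilde\alpha_2-t_0)$. Let $D_1,D_2,D_3$ denote the $(1,2)$, $(2,3)$, $(1,3)$ row-minors of a $3\times 2$ matrix, respectively. Let $A\in M^{4\times 4}$ be the matrix whose $j$-th column is $(D_1(\zeta_j),D_2(\zeta_j),D_3(\zeta_j),1)^T$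 for $j=1,2,3,4$. For $\epsilon>0$ and $\gamma\in\mathbb{R}^4$ define $L^{\epsilon}(\gamma):=A\gamma-(0,0,0,\epsilon)^T$, $Q(\gamma):=\left(D_1\left(\sum_{j=1}^4[\gamma]_j\zeta_j\right),D_2\left(\sum_{j=1}^4[\gamma]_j\zeta_j\right),D_3\left(\sum_{j=1}^4[\gamma]_j\zeta_j\right),0\right)^T$, and $G^{\epsilon}(\gamma):=L^{\epsilon}(\gamma)-Q(\gamma)$. *)

(* Defs.v *)
From Stdlib Require Import Reals.
From Coquelicot Require Import Coquelicot.
Open Scope R_scope.

Definition C2 (a : R -> R) : Prop :=
  (forall x, ex_derive a x) /\
  (forall x, ex_derive (Derive a) x) /\
  (forall x, continuous (Derive (Derive a)) x).

Definition Fint (a : R -> R) (xi : R) : R := RInt a 0 xi.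

Record M32 := mkM32 { m11 : R; m12 : R; m21 : R; m22 : R; m31 : R; m32 : R }.

Definition M32_add (M N : M32) : M32 :=
  mkM32 (m11 M + m11 N) (m12 M + m12 N) (m21 M + m21 N)
        (m22 M + m22 N) (m31 M + m31 N) (m32 M + m32 N).
Definition M32_scale (c : R) (M : M32) : M32 :=
  mkM32 (c * m11 M) (c * m12 M) (c * m21 M) (c * m22 M) (c * m31 M) (c * m32 M).

Definition D1 (M : M32) : R := m11 M * m22 M - m12 M * m21 M.
Definition D2 (M : M32) : R := m21 M * m32 M - m22 M * m31 M.
Definition D3 (M : M32) : R := m11 M * m32 M - m12 M * m31 M.

Definition P1 (a : R -> R) (al1 al2 u v : R) : M32 :=
  mkM32 (u - al1) (v - al2)
        (a v - a al2) (u - al1)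
        ((u - al1) * (a v - a al2))
        ((u - al1) ^ 2 / 2 + Fint a v - Fint a al2 - a al2 * (v - al2)).

Record V4 := mkV4 { c1 : R; c2 : R; c3 : R; c4 : R }.
Definition V4_zero : V4 := mkV4 0 0 0 0.
Definition V4_nonneg (g : V4) : Prop :=
  0 <= c1 g /\ 0 <= c2 g /\ 0 <= c3 g /\ 0 <= c4 g.
Definition V4_sub (x y : V4) : V4 :=
  mkV4 (c1 x - c1 y) (c2 x - c2 y) (c3 x - c3 y) (c4 x - c4 y).

Section Construction.
Variables (a : R -> R) (al1 al2 s0 t0 : R).

Definition zeta1 : M32 := P1 a al1 al2 (al1 + s0) al2.
Definition zeta2 : M32 := P1 a al1 al2 (al1 - s0) al2.
Definition zeta3 : M32 := P1 a al1 al2 al1 (al2 + t0).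
Definition zeta4 : M32 := P1 a al1 al2 al1 (al2 - t0).

(* column j of A is (D1 zeta_j, D2 zeta_j, D3 zeta_j, 1)^T *)
Definition Acol (Z : M32) : V4 := mkV4 (D1 Z) (D2 Z) (D3 Z) 1.

Definition Amul (g : V4) : V4 :=
  let k1 := Acol zeta1 in let k2 := Acol zeta2 in
  let k3 := Acol zeta3 in let k4 := Acol zeta4 in
  mkV4 (c1 g * c1 k1 + c2 g * c1 k2 + c3 g * c1 k3 + c4 g * c1 k4)
       (c1 g * c2 k1 + c2 g * c2 k2 + c3 g * c2 k3 + c4 g * c2 k4)
       (c1 g * c3 k1 + c2 g * c3 k2 + c3 g * c3 k3 + c4 g * c3 k4)
       (c1 g * c4 k1 + c2 g * c4 k2 + c3 g * c4 k3 + c4 g * c4 k4).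

Definition Lmap (eps : R) (g : V4) : V4 := V4_sub (Amul g) (mkV4 0 0 0 eps).

Definition combo (g : V4) : M32 :=
  M32_add (M32_add (M32_scale (c1 g) zeta1) (M32_scale (c2 g) zeta2))
          (M32_add (M32_scale (c3 g) zeta3) (M32_scale (c4 g) zeta4)).

Definition Qmap (g : V4) : V4 :=
  mkV4 (D1 (combo g)) (D2 (combo g)) (D3 (combo g)) 0.

Definition Gmap (eps : R) (g : V4) : V4 := V4_sub (Lmap eps g) (Qmap g).

End Construction.

(* Main.v *)
Require Import Defs.
From Stdlib Require Import Reals Lra Psatz.
From Coquelicot Require Import Coquelicot.
Open Scope R_scope.

Definition mf H Hp k := (Hp - H) / (H + Hp - 2*k).
Definition rhof A B H Hp k := (1 + mf H Hp k) * / A / 2 - (1 - mf H Hp k) * / B / 2.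
Definition alf A B H Hp t0 k := t0/2 + (1+mf H Hp k)*H * / A / 2 + (1 - mf H Hp k)*Hp * / B / 2.
Definition bef A B H Hp t0 k := t0 * mf H Hp k * rhof A B H Hp k / 2.
Definition discf A B H Hp t0 k := alf A B H Hp t0 k ^2 - 4 * bef A B H Hp t0 k * k.
Definition Tf A B H Hp t0 k := 2*k / (alf A B H Hp t0 k + sqrt (discf A B H Hp t0 k)).
Definition uf A B H Hp t0 k := Tf A B H Hp t0 k * (1 + mf H Hp k) * / A / 2.
Definition wf A B H Hp t0 k := Tf A B H Hp t0 k * (1 - mf H Hp k) * / B / 2.
Definition qf A B H Hp s0 t0 k := t0 * Tf A B H Hp t0 k * (1 - Tf A B H Hp t0 k * mf H Hp k * rhof A B H Hp k) / s0^2.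
Definition ef A B H Hp s0 t0 k := qf A B H Hp s0 t0 k + uf A B H Hp t0 k + wf A B H Hp t0 k.

Lemma pointwise A B H Hp s0 t0 k : 0<A -> 0<B -> 0<H -> 0<Hp -> 0<s0 -> 0<t0 ->
  0 <= k -> k <= H/4 -> k <= Hp/4 -> k * (/A + /B) <= t0/16 ->
  let m := mf H Hp k in let T := Tf A B H Hp t0 k in
  let u := uf A B H Hp t0 k in let w := wf A B H Hp t0 k in let q := qf A B H Hp s0 t0 k in
  H + Hp - 2*k > 0 /\ 0 < discf A B H Hp t0 k /\ alf A B H Hp t0 k + sqrt (discf A B H Hp t0 k) > 0 /\
   (0 <= u /\ 0 <= w /\ 0 <= q /\ (0 < k -> 0 < q)) /\
   q*s0^2 - t0*(u*A+w*B) + t0*(u-w)*(u*A-w*B) = 0 /\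
   u*A*H - w*B*Hp - (u*A - w*B)*(s0^2*q/2 + u*H + w*Hp) = 0.
Proof.
intros hA hB hH hHp hs ht hk0 hk1 hk2 hk3 m T u w q.
set (D := H + Hp - 2*k).
assert (hD : D > 0) by (unfold D; lra).
assert (hmD : m * D = Hp - H) by (unfold m, mf; fold D; field; lra).
assert (hm1 : -1 <= m).
{ assert (h : (m+1)*D >= 0) by (rewrite Rmult_plus_distr_r, hmD; unfold D; lra).
  destruct (Rle_or_lt (-1) m) as [|hc]; [auto|]. assert ((m+1)*D < 0) by (apply Rmult_neg_pos; lra). lra. }
assert (hm2 : m <= 1).
{ assert (h : (1-m)*D >= 0) by (rewrite Rmult_minus_distr_r, hmD; unfold D; lra).
  destruct (Rle_or_lt m 1) as [|hc]; [auto|]. assert ((1-m)*D < 0) by (apply Rmult_neg_pos; lra). lra. }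
set (iA := / A). set (iB := / B).
assert (hiA : 0 < iA) by (apply Rinv_0_lt_compat; lra).
assert (hiB : 0 < iB) by (apply Rinv_0_lt_compat; lra).
assert (eA : A * iA = 1) by (unfold iA; field; lra).
assert (eB : B * iB = 1) by (unfold iB; field; lra).
set (rho := rhof A B H Hp k).
assert (erho : rho = (1+m)*iA/2 - (1-m)*iB/2) by reflexivity.
set (a1 := m*(1+m)/2). set (a2 := m*(1-m)/2).
assert (emr : m*rho = a1*iA - a2*iB).
{ rewrite erho. unfold a1, a2. clearbody m iA iB. field. }
assert (ha1 : -1 <= a1 <= 1) by (unfold a1; split; nra).
assert (ha2 : -1 <= a2 <= 1) by (unfold a2; split; nra).
assert (hr1 : m*rho <= iA + iB).
{ rewrite emr. assert (0 <= (1-a1)*iA) by (apply Rmult_le_pos; lra).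
  assert (0 <= (1+a2)*iB) by (apply Rmult_le_pos; lra). nra. }
assert (hr2 : - (iA + iB) <= m*rho).
{ rewrite emr. assert (0 <= (1+a1)*iA) by (apply Rmult_le_pos; lra).
  assert (0 <= (1-a2)*iB) by (apply Rmult_le_pos; lra). nra. }
set (al := alf A B H Hp t0 k).
assert (eal : al = t0/2 + (1+m)*H*iA/2 + (1-m)*Hp*iB/2) by reflexivity.
assert (hal : t0/2 <= al).
{ assert (0 <= (1+m)*H*iA) by (apply Rmult_le_pos; [apply Rmult_le_pos|]; lra).
  assert (0 <= (1-m)*Hp*iB) by (apply Rmult_le_pos; [apply Rmult_le_pos|]; lra). lra. }
set (be := bef A B H Hp t0 k).
assert (ebe : be = t0 * (m*rho) / 2) by (unfold be, bef; fold m rho; field).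
set (di := discf A B H Hp t0 k).
assert (edi : di = al^2 - 4*be*k) by reflexivity.
assert (hdi : t0^2/8 <= di).
{ assert (h1 : t0^2/4 <= al^2) by nra.
  assert (h2 : (m*rho)*k <= (iA+iB)*k) by (apply Rmult_le_compat_r; lra).
  assert (h4 : (iA+iB)*k <= t0/16) by (rewrite Rmult_comm; exact hk3).
  assert (h3 : t0 * ((m*rho)*k) <= t0 * (t0/16)) by (apply Rmult_le_compat_l; lra).
  rewrite edi, ebe. replace (4 * (t0 * (m * rho) / 2) * k) with (2 * (t0 * ((m*rho)*k))) by field.
  replace (t0 * (t0/16)) with (t0^2/16) in h3 by field. lra. }
assert (hdi0 : 0 < di) by nra.
set (r := sqrt di).
assert (hr : 0 < r) by (apply sqrt_lt_R0; lra).
assert (rr : r * r = di) by (apply sqrt_sqrt; lra).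
assert (hsum : al + r > 0) by lra.
assert (eT : T * (al + r) = 2*k) by (unfold T, Tf; fold al di r; field; lra).
assert (hT0 : 0 <= T) by nra.
assert (hT1 : T * t0 <= 4 * k) by nra.
assert (hTg : T * (iA+iB) <= 1/4).
{ assert (h4 : (iA+iB)*k <= t0/16) by (rewrite Rmult_comm; exact hk3).
  assert (h5 : (T*t0)*(iA+iB) <= (4*k)*(iA+iB)) by (apply Rmult_le_compat_r; lra).
  assert (h6 : t0 * (T*(iA+iB)) <= t0 * (1/4)) by (replace (t0 * (T*(iA+iB))) with ((T*t0)*(iA+iB)) by field; lra).
  apply Rmult_le_reg_l with t0; lra. }
assert (hTmr : T * (m*rho) <= 1/4).
{ assert (T*(m*rho) <= T*(iA+iB)) by (apply Rmult_le_compat_l; lra). lra. }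
assert (hTmr2 : -(1/4) <= T * (m*rho)).
{ assert (T*(-(iA+iB)) <= T*(m*rho)) by (apply Rmult_le_compat_l; lra). lra. }
assert (key : al * T - be * T^2 = k).
{ assert (e2 : (al * T - be * T^2 - k) * (al + r)^2 = 0).
  { replace ((al * T - be * T^2 - k) * (al + r)^2) with
      (al * (al + r) * (T * (al + r)) - be * (T*(al+r))^2 - k * (al+r)^2) by field.
    rewrite eT. replace (al * (al + r) * (2 * k) - be * (2 * k) ^ 2 - k * (al + r) ^ 2)
      with (k * (al^2 - 4*be*k - r*r)) by field. rewrite rr, edi. field. }
  assert (hne : (al + r)^2 <> 0) by (apply pow_nonzero; lra).
  apply Rmult_integral in e2. destruct e2 as [e2|e2]; [lra|contradiction]. }
assert (eu : u = T*(1+m)*iA/2) by reflexivity.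
assert (ew : w = T*(1-m)*iB/2) by reflexivity.
assert (eq : q * s0^2 = t0 * T * (1 - T * (m * rho))).
{ unfold q, qf; fold T m rho. field. lra. }
assert (euw : u - w = T * rho) by (rewrite eu, ew, erho; field).
assert (uA : u * A = T*(1+m)/2) by (rewrite eu; replace (T * (1 + m) * iA / 2 * A) with (T*(1+m)/2 * (A*iA)) by field; rewrite eA; field).
assert (wB : w * B = T*(1-m)/2) by (rewrite ew; replace (T * (1 - m) * iB / 2 * B) with (T*(1-m)/2 * (B*iB)) by field; rewrite eB; field).
assert (hs2 : 0 < s0^2) by nra.
assert (hq0 : 0 <= q * s0^2) by (rewrite eq; apply Rmult_le_pos; [apply Rmult_le_pos|]; lra).
assert (hq : 0 <= q).
{ destruct (Rle_or_lt 0 q) as [|hc]; [auto|]. assert (q * s0^2 < 0) by (apply Rmult_neg_pos; lra). lra. }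
split; [exact hD|]. split; [exact hdi0|]. split; [exact hsum|]. split; [|split].
- split; [rewrite eu; assert (0 <= T*(1+m)*iA) by (apply Rmult_le_pos; [apply Rmult_le_pos|]; lra); lra|split; [rewrite ew; assert (0 <= T*(1-m)*iB) by (apply Rmult_le_pos; [apply Rmult_le_pos|]; lra); lra| split; [exact hq|]]].
  intros kp. assert (0 < T).
  { destruct hT0 as [|e]; [auto|]. rewrite <- e in eT. lra. }
  assert (0 < q * s0^2) by (rewrite eq; apply Rmult_lt_0_compat; [apply Rmult_lt_0_compat|]; lra).
  destruct hq as [|e]; [auto|]. rewrite <- e in H1. lra.
- rewrite eq, uA, wB, euw. field.
- assert (K : s0^2*q/2 + u*H + w*Hp = k).
  { rewrite <- key, ebe, eal, eu, ew. replace (s0^2*q/2) with (q*s0^2/2) by field. rewrite eq. field. }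
  rewrite K, uA, wB.
  replace (T * (1 + m) / 2 * H - T * (1 - m) / 2 * Hp - (T * (1 + m) / 2 - T * (1 - m) / 2) * k)
   with (T/2 * ((H - Hp) + m * D)) by (unfold D; field).
  rewrite hmD. field.
Qed.

Lemma ef_cont A B H Hp s0 t0 k : 0<A -> 0<B -> 0<H -> 0<Hp -> 0<s0 -> 0<t0 ->
  0 <= k -> k <= H/4 -> k <= Hp/4 -> k * (/A + /B) <= t0/16 ->
  continuity_pt (ef A B H Hp s0 t0) k.
Proof.
intros hA hB hH hHp hs ht hk0 hk1 hk2 hk3.
destruct (pointwise A B H Hp s0 t0 k hA hB hH hHp hs ht hk0 hk1 hk2 hk3) as (h1 & h2 & h3 & _).
apply continuity_pt_filterlim. apply (ex_derive_continuous (K:=R_AbsRing) (V:=R_NormedModule)).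
unfold ef, qf, uf, wf, Tf, discf, bef, alf, rhof, mf.
assert (h3' : alf A B H Hp t0 k + sqrt (discf A B H Hp t0 k) <> 0) by lra.
assert (h1' : H + Hp - 2 * k <> 0) by lra.
auto_derive.
repeat split; first [exact h1' | exact h2 | exact h3'].
Qed.

Lemma alg_main A B H Hp s0 t0 : 0<A -> 0<B -> 0<H -> 0<Hp -> 0<s0 -> 0<t0 ->
  exists eps0, 0 < eps0 /\ eps0 < 1 /\ forall eps, 0 < eps -> eps <= eps0 ->
  exists q u w, 0 <= q /\ 0 <= u /\ 0 <= w /\
   q*s0^2 - t0*(u*A+w*B) + t0*(u-w)*(u*A-w*B) = 0 /\
   u*A*H - w*B*Hp - (u*A - w*B)*(s0^2*q/2 + u*H + w*Hp) = 0 /\ q + u + w = eps.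
Proof.
intros hA hB hH hHp hs ht.
set (g := / A + / B).
assert (hg : 0 < g) by (unfold g; assert (0 < /A) by (apply Rinv_0_lt_compat; lra);
   assert (0 < /B) by (apply Rinv_0_lt_compat; lra); lra).
set (ks := Rmin (Rmin H Hp / 4) (t0 / (16 * g))).
assert (hks : forall k, 0 <= k <= ks -> k <= H/4 /\ k <= Hp/4 /\ k * g <= t0/16).
{ intros k [h0 h1]. unfold ks in h1.
  assert (e1 := Rmin_l (Rmin H Hp / 4) (t0 / (16 * g))).
  assert (e2 := Rmin_r (Rmin H Hp / 4) (t0 / (16 * g))).
  assert (e3 := Rmin_l H Hp). assert (e4 := Rmin_r H Hp).
  split; [lra|split; [lra|]].
  assert (k * g <= t0 / (16 * g) * g) by (apply Rmult_le_compat_r; lra).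
  replace (t0 / (16 * g) * g) with (t0/16) in H0 by (field; lra). exact H0. }
assert (hks0 : 0 < ks).
{ unfold ks. apply Rmin_glb_lt. 
  - assert (0 < Rmin H Hp) by (apply Rmin_glb_lt; lra). lra.
  - apply Rdiv_lt_0_compat; lra. }
set (E := ef A B H Hp s0 t0).
assert (sol : forall k, 0 <= k <= ks -> exists q u w, 0 <= q /\ 0 <= u /\ 0 <= w /\
   q*s0^2 - t0*(u*A+w*B) + t0*(u-w)*(u*A-w*B) = 0 /\
   u*A*H - w*B*Hp - (u*A - w*B)*(s0^2*q/2 + u*H + w*Hp) = 0 /\ q + u + w = E k).
{ intros k hk. destruct (hks k hk) as (b1 & b2 & b3).
  destruct (pointwise A B H Hp s0 t0 k hA hB hH hHp hs ht (proj1 hk) b1 b2 b3) as (_ & _ & _ & (p1 & p2 & p3 & _) & p4 & p5).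
  exists (qf A B H Hp s0 t0 k), (uf A B H Hp t0 k), (wf A B H Hp t0 k).
  repeat split; auto. }
assert (hE : 0 < E ks).
{ destruct (hks ks (conj (Rlt_le _ _ hks0) (Rle_refl _))) as (b1 & b2 & b3).
  destruct (pointwise A B H Hp s0 t0 ks hA hB hH hHp hs ht (Rlt_le _ _ hks0) b1 b2 b3) as (_ & _ & _ & (p1 & p2 & p3 & p6) & p4 & p5).
  specialize (p6 hks0). unfold E, ef. lra. }
assert (hE0 : E 0 = 0).
{ assert (T0 : Tf A B H Hp t0 0 = 0) by (unfold Tf; unfold Rdiv; rewrite Rmult_0_r, Rmult_0_l; reflexivity).
  unfold E, ef, qf, uf, wf. rewrite T0. field. lra. }
exists (Rmin (E ks) (1/2)). split; [apply Rmin_glb_lt; lra|]. split.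
{ assert (h := Rmin_r (E ks) (1/2)). lra. }
intros eps he1 he2.
assert (h := Rmin_l (E ks) (1/2)).
destruct (Req_dec eps (E ks)) as [e|ne].
{ rewrite e. apply sol. lra. }
assert (cont : forall x, 0 <= x <= ks -> continuity_pt (fun k => E k - eps) x).
{ intros x hx. destruct (hks x hx) as (b1 & b2 & b3).
  assert (c1 := ef_cont A B H Hp s0 t0 x hA hB hH hHp hs ht (proj1 hx) b1 b2 b3).
  assert (c2 : continuity_pt (fun _ => eps) x) by (apply continuity_pt_const; intros ? ?; reflexivity).
  exact (continuity_pt_minus _ _ _ c1 c2). }
destruct (Ranalysis5.IVT_interv (fun k => E k - eps) 0 ks cont hks0) as [z [hz ez]].
- rewrite hE0; lra.
- lra.
- assert (E z = eps) by lra. rewrite <- H0. apply sol. exact hz.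
Qed.
Lemma analytic a al2 : C2 a -> Derive a al2 > 0 -> exists delta, 0 < delta /\
  forall t0, 0 < t0 -> t0 < delta ->
  a (al2+t0) - a al2 > 0 /\ a al2 - a (al2-t0) > 0 /\
  Fint a (al2+t0) - Fint a al2 - a al2 * (al2+t0-al2) > 0 /\
  Fint a (al2-t0) - Fint a al2 - a al2 * (al2-t0-al2) > 0.
Proof.
intros [Ha [Hda Hcd]] hpos.
assert (cD : continuity_pt (Derive a) al2).
{ apply continuity_pt_filterlim. apply (ex_derive_continuous (K:=R_AbsRing) (V:=R_NormedModule)). apply Hda. }
destruct (cD (Derive a al2 / 2)) as [del [hdel hd]]; [lra|].
assert (pos : forall x, al2 - del < x < al2 + del -> Derive a x > 0).
{ intros x hx. destruct (Req_dec x al2) as [e|ne]; [subst; lra|].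
  assert (h := hd x). simpl in h. unfold R_dist, D_x, no_cond in h.
  assert (Rabs (Derive a x - Derive a al2) < Derive a al2 / 2).
  { apply h. split; [split; auto|]. apply Rabs_def1; lra. }
  apply Rabs_def2 in H. lra. }
assert (da : forall x, derivable_pt_lim a x (Derive a x)).
{ intros x. apply is_derive_Reals. apply Derive_correct. apply Ha. }
assert (ca : forall x, continuous a x).
{ intros x. apply (ex_derive_continuous (K:=R_AbsRing) (V:=R_NormedModule)). apply Ha. }
assert (incr : forall x y, al2 - del < x -> x < y -> y < al2 + del -> a y - a x > 0).
{ intros x y h1 h2 h3. destruct (MVT_cor2 a (Derive a) x y h2 (fun c _ => da c)) as [c [ec hc]].
  rewrite ec. apply Rmult_lt_0_compat; [apply pos; lra|lra]. }
assert (dF : forall x, derivable_pt_lim (Fint a) x (a x)).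
{ intros x. apply is_derive_Reals. unfold Fint.
  apply (is_derive_RInt a (RInt a 0) 0 x); [|apply ca].
  apply filter_forall. intros y. apply (RInt_correct (V:=R_CompleteNormedModule)). apply (ex_RInt_continuous (V:=R_CompleteNormedModule)). intros; apply ca. }
exists del. split; [exact hdel|]. intros t0 ht1 ht2.
split; [apply incr; lra|]. split; [apply incr; lra|]. split.
- destruct (MVT_cor2 (Fint a) a al2 (al2+t0) ltac:(lra) (fun c _ => dF c)) as [c [ec hc]].
  replace (Fint a (al2 + t0) - Fint a al2 - a al2 * (al2 + t0 - al2))
    with ((a c - a al2) * t0) by (rewrite ec; field).
  apply Rmult_lt_0_compat; [apply incr; lra|lra].
- destruct (MVT_cor2 (Fint a) a (al2-t0) al2 ltac:(lra) (fun c _ => dF c)) as [c [ec hc]].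
  replace (Fint a (al2 - t0) - Fint a al2 - a al2 * (al2 - t0 - al2))
    with ((a al2 - a c) * t0) by (replace (Fint a (al2 - t0)) with (Fint a al2 - a c * (al2 - (al2 - t0))) by lra; field).
  apply Rmult_lt_0_compat; [apply incr; lra|lra].
Qed.

Theorem lemma17 (a : R -> R) (al2 : R) :
  C2 a -> Derive a al2 > 0 ->
  exists delta : R, 0 < delta /\
    forall al1 s0 t0 : R, 0 < s0 -> s0 < delta -> 0 < t0 -> t0 < delta ->
      exists eps0 : R, 0 < eps0 /\ eps0 < 1 /\
        forall eps : R, 0 < eps -> eps <= eps0 ->
          exists g : V4, V4_nonneg g /\ Gmap a al1 al2 s0 t0 eps g = V4_zero.
Proof.
intros hC hpos.
destruct (analytic a al2 hC hpos) as [del [hdel P]].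
exists del. split; [exact hdel|].
intros al1 s0 t0 hs1 hs2 ht1 ht2.
destruct (P t0 ht1 ht2) as (pA & pB & pH & pHp).
destruct (alg_main (a (al2+t0) - a al2) (a al2 - a (al2-t0))
   (Fint a (al2+t0) - Fint a al2 - a al2 * (al2+t0-al2))
   (Fint a (al2-t0) - Fint a al2 - a al2 * (al2-t0-al2)) s0 t0 pA pB pH pHp hs1 ht1)
  as [eps0 [he0 [he1 main]]].
exists eps0. split; [exact he0|]. split; [exact he1|].
intros eps hep hle.
destruct (main eps hep hle) as (q & u & w & hq & hu & hw & E1 & E2 & E4).
exists (mkV4 (q/2) (q/2) u w). split.
{ unfold V4_nonneg; simpl. lra. }
assert (E4' : q + u + w - eps = 0) by lra.
unfold Gmap, Lmap, Qmap, V4_sub, Amul, combo, Acol, zeta1, zeta2, zeta3, zeta4, P1,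
  M32_add, M32_scale, D1, D2, D3, V4_zero; simpl.
f_equal.
- lazymatch type of E1 with ?Y = _ => transitivity Y; [field|exact E1] end.
- lazymatch type of E2 with ?Y = _ => transitivity Y; [field|exact E2] end.
- field.
- lazymatch type of E4' with ?Y = _ => transitivity Y; [field|exact E4'] end.
Qed.
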